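(* Let $\beta\in(0,\tfrac12)$ and let $\lambda$ be an eigenvalue of $\Delta_\beta$. Then $\lambda\ge\lambda_1(\beta)$.
   Context: Tree: for an integer $m\ge2$, $\mathbb{T}_m$ has vertices the root $\emptyset$ and all finite sequences $(\emptyset,a_1,\dots,a_k)$, $a_i\in\{0,\dots,m-1\}$; $|x|$ is the level, successors of $x$ are $(x,i)$, $\hat x$ is the immediate predecessor of $x\ne\emptyset$. A branch is an infinite sequence $(x_n)_{n\ge0}$ with $x_0=\emptyset$, $x_{n+1}$ a successor of $x_n$; $\lim_{x\to y}u(x)=\lim_n u(x_n)$ for a branch $y=(x_n)$. Operator: $p_\beta=\beta/(1-\beta)$ for $\beta\in(0,1)$. $\Delta_\beta u(\emptyset)=\frac1m\sum_{i=0}^{m-1}u(\emptyset,i)-u(\emptyset)$ and, for $x\ne\emptyset$, $\Delta_\beta u(x)=\big(\beta u(\hat x)+\frac{1-\beta}{m}\sum_{i=0}^{m-1}u(x,i)-u(x)\big)p_\beta^{-|x|}$. Eigenvalues: $\lambda\in\mathbb{R}$ is an eigenvalue of $\Delta_\beta$ if there is a bounded $u\not\equiv0$ with $-\Delta_\beta u=\lambda u$ on $\mathbb{T}_m$ and $\lim_{x\to y}u(x)=0$ for every branch $y$. $\mathcal{A}_\beta=\{\lambda>0:\exists v:\mathbb{T}_m\to\mathbb{R}\text{ and constants }0<c<C\text{ with } c<v<C \text{ and } \Delta_\beta v+\lambda v\le0 \text{ on }\mathbb{T}_m\}$, $\lambda_1(\beta)=\sup\mathcal{A}_\beta$. *)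

(* Defs.v *)
From HB Require Import structures.
From mathcomp Require Import all_boot all_order all_algebra.
From mathcomp Require Import all_classical all_reals all_analysis.
Set Implicit Arguments. Unset Strict Implicit. Unset Printing Implicit Defensive.
Import Order.TTheory GRing.Theory Num.Theory.
Import numFieldNormedType.Exports.
Local Open Scope ring_scope.
Local Open Scope classical_set_scope.

(* Vertices of T_m: finite sequences of digits in {0,...,m-1}; the root is [::],
   the successors of x are (rcons x i), the level |x| is (size x), and the
   immediate predecessor of a nonempty x is (take (size x).-1 x). *)
Definition vertex (m : nat) := seq 'I_m.

Definition pred_vertex (m : nat) (x : vertex m) : vertex m := take (size x).-1 x.

Definition pbeta {R : realType} (beta : R) : R := beta / (1 - beta).

Definition Delta {R : realType} (m : nat) (beta : R) (u : vertex m -> R)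
  (x : vertex m) : R :=
  if x is [::] then (m%:R)^-1 * (\sum_(i < m) u (rcons x i)) - u x
  else (beta * u (pred_vertex x) + (1 - beta) / m%:R * (\sum_(i < m) u (rcons x i))
        - u x) * (pbeta beta) ^- (size x).

(* A branch is determined by its digit sequence b : nat -> 'I_m; its n-th vertex
   is x_n = mkseq b n = [:: b 0; ...; b (n-1)] (so x_0 = root and
   x_{n+1} = rcons x_n (b n) is a successor of x_n). *)
Definition is_eigenvalue {R : realType} (m : nat) (beta lam : R) : Prop :=
  exists u : vertex m -> R,
    [/\ (exists M : R, forall x, `|u x| <= M),
        (exists x, u x != 0),
        (forall x, - Delta beta u x = lam * u x) &
        (forall b : nat -> 'I_m, (fun n => u (mkseq b n)) @ \oo --> (0 : R))].

Definition A_beta {R : realType} (m : nat) (beta : R) : set R :=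
  [set lam | 0 < lam /\
     exists (v : vertex m -> R) (c C : R),
       [/\ 0 < c, c < C, (forall x, c < v x /\ v x < C) &
           (forall x, Delta beta v x + lam * v x <= 0)]].

(* lambda_1(beta) = sup A_beta, taken in the extended reals so that no
   convention for empty/unbounded sets is silently imposed. *)
Definition lambda1 {R : realType} (m : nat) (beta : R) : \bar R :=
  ereal_sup [set l%:E | l in A_beta m beta].

(* Main.v *)
Require Import Defs.
From HB Require Import structures.
From mathcomp Require Import all_boot all_order all_algebra.
From mathcomp Require Import all_classical all_reals all_analysis.
From mathcomp Require Import ring lra zify.
Import Order.TTheory GRing.Theory Num.Theory.
Local Open Scope ring_scope.

Lemma Delta_lin (R : realType) (m : nat) (beta a b : R) (g k : vertex m -> R) x :
  Delta beta (fun y => a * g y + b * k y) x = a * Delta beta g x + b * Delta beta k x.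
Proof.
rewrite /Delta; case: x => [|z s] /=; rewrite big_split /= -!mulr_sumr; ring.
Qed.

Lemma smaller_neighbor (R : realType) (m : nat) (beta : R) (h : vertex m -> R) x :
  (0 < m)%N -> 0 < beta -> beta < 1 ->
  Delta beta h x < 0 ->
  (x != [::] /\ h (pred_vertex x) < h x) \/ exists i, h (rcons x i) < h x.
Proof.
move=> m0 b0 b1 HD.
have [Hc|Hc] := pselect (exists i, h (rcons x i) < h x); first by right.
have Hall : forall i, h x <= h (rcons x i).
  by move=> i; rewrite leNgt; apply/negP => Hi; apply: Hc; exists i.
have Hs : m%:R * h x <= \sum_(i < m) h (rcons x i).
  apply: le_trans (ler_sum _ (fun i _ => Hall i)).
  by rewrite sumr_const card_ord mulr_natl.
have mp : 0 < (m%:R : R) by rewrite ltr0n.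
move: HD; rewrite /Delta; case: x Hc Hall Hs => [|z s] Hc Hall Hs /= HD.
  exfalso.
  have : h [::] <= (m%:R)^-1 * \sum_(i < m) h (rcons [::] i).
    by rewrite ler_pdivlMl.
  rewrite -subr_ge0 => H; move: HD; rewrite ltNge H //.
left; split => //.
rewrite ltNge; apply/negP => Hp.
have pb : 0 < pbeta beta ^- (size s).+1.
  by rewrite invr_gt0 exprn_gt0 // /pbeta divr_gt0 // subr_gt0.
move: HD; rewrite pmulr_llt0 // => HD.
have : (1 - beta) * h (z :: s) <= (1 - beta) / m%:R * \sum_(i < m) h (rcons (z :: s) i).
  rewrite -mulrA; apply: ler_wpM2l; first by rewrite subr_ge0 ltW.
  by rewrite ler_pdivlMl.
have : beta * h (z :: s) <= beta * h (pred_vertex (z :: s)).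
  by apply: ler_wpM2l => //; apply: ltW.
move: HD; set A := _ / _ * _. set P := h (pred_vertex _). lra.
Qed.

Theorem corollary5p3 (R : realType) (m : nat) (beta lam : R) :
  (2 <= m)%N -> 0 < beta -> beta < 1 / 2 ->
  is_eigenvalue m beta lam -> (lambda1 m beta <= lam%:E)%E.
Proof.
move=> Hm b0 bhalf [u [[M HM] [x1 Hx1] Heig Hlim]].
apply: ge_ereal_sup => _ [l [l0 [v [c [C [c0 cC Hv Hsup]]]]] <-].
rewrite lee_fin leNgt; apply/negP => Hll.
have b1 : beta < 1 by lra.
have m0 : (0 < m)%N by apply: leq_trans Hm.
pose i0 : 'I_m := Ordinal m0.
pose s : R := if 0 < u x1 then 1 else -1.
pose f := fun x => s * u x.
have fx1 : 0 < f x1.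
  rewrite /f /s; case: ifP => H; first by rewrite mul1r.
  rewrite mulN1r oppr_gt0 lt_neqAle Hx1 /= leNgt H //.
have Hf : forall x, Delta beta f x = - lam * f x.
  move=> x.
  have -> : f = (fun y => s * u y + 0 * u y) by apply: funext => y; rewrite mul0r addr0.
  rewrite Delta_lin mul0r addr0 mul0r addr0.
  have := Heig x; rewrite /f => E. 
  have -> : Delta beta u x = - (lam * u x) by rewrite -E opprK.
  ring.
have fabs : forall x, `|f x| = `|u x|.
  move=> x; rewrite /f normrM /s; case: ifP => _; by rewrite ?normrN normr1 mul1r.
have vpos : forall x, 0 < v x by move=> x; case: (Hv x) => H _; lra.
have M0 : 0 <= M by apply: le_trans (HM x1).
pose E := [set f x / v x | x in [set: vertex m]]%classic.
have hasE : has_sup E.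
  split; first by exists (f x1 / v x1); exists x1.
  exists (M / c) => _ [x _ <-].
  have k0 : 0 <= M / c by rewrite divr_ge0 // ltW.
  have Mk : M = M / c * c by rewrite divfK // gt_eqF.
  have fM : f x <= M by apply: le_trans (ler_norm _) _; rewrite fabs.
  have vx : c < v x by case: (Hv x).
  rewrite ler_pdivrMr ?vpos //. nra.
pose t := sup E.
have Ht : forall x, f x <= t * v x.
  move=> x; have := sup_upper_bound hasE; move=> /(_ (f x / v x)) H.
  by rewrite -ler_pdivrMr ?vpos //; apply: H; exists x.
have tpos : 0 < t.
  have := sup_upper_bound hasE; move=> /(_ (f x1 / v x1)) H.
  apply: lt_le_trans (H _); last by exists x1.
  by rewrite divr_gt0 ?vpos.
pose h := fun x => t * v x + (-1) * f x.
have h0 : forall x, 0 <= h x by move=> x; have := Ht x; rewrite /h; lra.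
pose del := t * (l - lam) * c.
have del0 : 0 < del by rewrite /del !mulr_gt0 // subr_gt0.
pose eta := del / (`|lam| + 1).
have eta0 : 0 < eta by rewrite /eta divr_gt0 // ltr_pwDr // normr_ge0.
have key : forall x, h x < eta -> Delta beta h x < 0.
  move=> x hx.
  rewrite /h Delta_lin Hf.
  have := Hsup x => Hs.
  have vx : c < v x by case: (Hv x).
  have hx0 := h0 x.
  have e1 : `|lam| * eta < del.
    rewrite /eta mulrA ltr_pdivrMr; last by rewrite ltr_pwDr // normr_ge0.
    have : 0 <= `|lam| by rewrite normr_ge0.
    nra.
  have e2 : `|lam| * h x <= `|lam| * eta by apply: ler_wpM2l; [rewrite normr_ge0 | apply: ltW].
  have e3 : - lam * h x <= `|lam| * h x by apply: ler_wpM2r => //; rewrite -normrN ler_norm.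
  have e4 : del < t * (l - lam) * v x by rewrite /del ltr_pM2l // mulr_gt0 // subr_gt0.
  have e5 : t * Delta beta v x <= t * (- (l * v x)).
    by apply: ler_wpM2l; [apply: ltW | lra].
  move: e2 e3 hx; rewrite /h => e2 e3 hx.
  have ht : t * (l - lam) * v x = t * l * v x - t * lam * v x by ring.
  have h2 : t * (- (l * v x)) = - (t * l * v x) by ring.
  have h3 : -1 * (- lam * f x) = lam * f x by ring.
  have h4 : - lam * (t * v x + -1 * f x) = - (t * lam * v x) + lam * f x by ring.
  lra.
pose theta := Num.min eta (t * c / 2).
have th0 : 0 < theta by rewrite lt_min eta0 /= !mulr_gt0 // invr_gt0 ltr0n.
have C0 : 0 < C by lra.
have [_ [x0 _ <-] Hx0] := sup_adherent (divr_gt0 th0 C0) hasE.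
have hx0 : h x0 < theta.
  have vx : v x0 < C by case: (Hv x0).
  have : t - f x0 / v x0 < theta / C by move: Hx0; rewrite -/t; lra.
  move=> H.
  have : v x0 * (t - f x0 / v x0) < C * (theta / C).
    apply: le_lt_trans (_ : v x0 * (t - f x0 / v x0) <= v x0 * (theta / C)) _.
      by apply: ler_wpM2l; [apply: ltW; apply: vpos | apply: ltW; exact: H].
    by rewrite ltr_pM2r ?divr_gt0.
  rewrite mulrBr mulrCA mulfV ?gt_eqF ?vpos // mulr1 mulrCA mulfV ?gt_eqF // mulr1.
  rewrite /h; lra.
have anc : forall n x, (size x <= n)%N -> exists y, h y <= h x /\ (y = [::] \/ h y <= h (pred_vertex y)).
  elim=> [|n IH] x Hx.
    by exists x; split => //; left; apply/eqP; rewrite -size_eq0 -leqn0.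
  case: x Hx => [|z s'] Hx; first by exists [::]; split => //; left.
  have [H|H] := leP (h (z :: s')) (h (pred_vertex (z :: s'))).
    by exists (z :: s'); split => //; right.
  have [|y [Hy1 Hy2]] := IH (pred_vertex (z :: s')).
    by rewrite /pred_vertex size_take /= ltnSn.
  by exists y; split => //; apply: le_trans Hy1 (ltW H).
have [y [Hy1 Hy2]] := anc _ x0 (leqnn _).
pose P := fun x => h x < theta /\ (x = [::] \/ h x <= h (pred_vertex x)).
have Py : P y by split => //; apply: le_lt_trans Hy1 hx0.
have step : forall x, P x -> exists i, P (rcons x i).
  move=> x [Hx1' Hx2].
  have : Delta beta h x < 0 by apply: key; apply: lt_le_trans Hx1' _; rewrite ge_min lexx.
  case/(@smaller_neighbor R m beta h x m0 b0 b1) => [[Hne Hlt]|[i Hi]].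
    by case: Hx2 => [Hx|H]; [move: Hne; rewrite Hx | move: Hlt; rewrite ltNge H].
  exists i; split; first by apply: lt_trans Hx1'.
  right; rewrite /pred_vertex size_rcons /= -cats1 take_size_cat //; apply: ltW; rewrite cats1. exact: Hi.
have Hex : forall x, exists i : 'I_m, P x -> P (rcons x i).
  move=> x2.
  have [Px|nPx] := pselect (P x2); last by exists i0.
  by have [i Hi] := step x2 Px; exists i.
have [next Hnext] := boolp.choice Hex.
pose X := fun n => iter n (fun x => rcons x (next x)) y.
have PX : forall n, P (X n) by elim=> [|n IH] //=; apply: Hnext.
have sizeX : forall n, size (X n) = (size y + n)%N.
  by elim=> [|n IH]; rewrite ?addn0 //= size_rcons -/(X n) IH addnS.
have prefix : forall n d k, (k < size (X n))%N -> nth i0 (X (n + d)%N) k = nth i0 (X n) k.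
  move=> n; elim=> [|d IH] k Hk; first by rewrite addn0.
  rewrite addnS /= nth_rcons -/(X (n + d)%N) sizeX.
  have Hk' : (k < size y + (n + d))%N by move: Hk; rewrite sizeX => Hk; apply: leq_trans Hk _; rewrite leq_add2l leq_addr.
  by rewrite Hk' IH.
pose b := fun k => nth i0 (X k.+1) k.
have mkX : forall n, mkseq b (size y + n) = X n.
  move=> n; apply: (@eq_from_nth _ i0); first by rewrite size_mkseq sizeX.
  move=> k; rewrite size_mkseq => Hk; rewrite nth_mkseq // /b.
  have [H|H] := leqP k.+1 n.
    by rewrite -(subnKC H) prefix // sizeX leq_addl.
  by rewrite -(subnKC (ltnW H)) prefix // sizeX.
have tc0 : 0 < t * c / 2 by rewrite !mulr_gt0 // invr_gt0 ltr0n.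
have [N _ HN] := cvgr0_norm_lt _ (Hlim b) _ tc0.
have := HN (size y + N)%N (leq_addl _ _) => /=; rewrite mkX -fabs => Hu.
have [HXN _] := PX N.
have vN : c < v (X N) by case: (Hv (X N)).
have thle : theta <= t * c / 2 by rewrite ge_min lexx orbT.
have : f (X N) <= `|f (X N)| by apply: ler_norm.
have : t * c <= t * v (X N) by apply: ler_wpM2l; [apply: ltW | apply: ltW].
move: HXN; rewrite /h. lra.
Qed.
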